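(* Let $d\ge 2$ and let $f$ be a monic centered polynomial of degree $d^2$. Then the following are equivalent: (1) $f(z)=(z^d+a)^d+b$ for some $a\in\mathbb{C}\setminus\{0\}$ and $b\in\mathbb{C}$; (2) $f$ has exactly $d+1$ distinct critical points $\alpha_1,\dots,\alpha_{d+1}$, with local degree $\deg_{\alpha_i}(f)=d$ for each $i$, and such that $f(\alpha_1)=f(\alpha_2)=\cdots=f(\alpha_d)$.
   Context: A polynomial is monic if its leading coefficient is $1$ and centered if the coefficient of the second highest degree term is $0$ (equivalently, the sum of its critical points, with multiplicity, is $0$). The local degree $\deg_\alpha(f)$ is the multiplicity with which $f$ takes the value $f(\alpha)$ at $\alpha$. *)

(* Defs.v *)
From HB Require Import structures.
From mathcomp Require Import all_boot all_order all_algebra.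
Set Implicit Arguments. Unset Strict Implicit. Unset Printing Implicit Defensive.
Import GRing.Theory Num.Theory.
Local Open Scope ring_scope.

Definition centered (R : nzRingType) (f : {poly R}) : Prop :=
  f`_((size f).-2) = 0.

Definition local_deg (R : fieldType) (f : {poly R}) (alpha : R) : nat :=
  mup alpha (f - (f.[alpha])%:P).

Definition critical_point (R : nzRingType) (f : {poly R}) (z : R) : bool :=
  root f^`() z.

(* Main.v *)
Require Import Defs.
From HB Require Import structures.
From mathcomp Require Import all_boot all_order all_algebra all_field.
From mathcomp Require Import zify ring lra.
Import GRing.Theory Num.Theory.
Local Open Scope ring_scope.

Lemma mupX {R : fieldType} (x : R) (p : {poly R}) n :
  p != 0 -> mup x (p ^+ n) = (mup x p * n)%N.
Proof.
move=> p0; elim: n => [|n IH]; first by rewrite expr0 muln0 mupNroot // root1.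
by rewrite exprS mupM ?expf_neq0 // IH mulnS.
Qed.

Lemma size_subXn {R : nzRingType} {p : {poly R}} {m} :
  p \is monic -> size p = m.+1 -> (size (p - 'X^m)%R <= m)%N.
Proof.
move=> mp sp; apply/leq_sizeP => j hj; rewrite coefB coefXn.
have [hjm|hjm] := eqVneq j m.
  by rewrite hjm -(monicP mp) lead_coefE sp subrr.
by rewrite nth_default ?sp ?subr0 //; move: hjm hj => /eqP; lia.
Qed.

Lemma sublead_mul {R : comNzRingType} (p q : {poly R}) m n :
  p \is monic -> q \is monic -> size p = m.+1 -> size q = n.+1 ->
  (0 < m)%N -> (0 < n)%N ->
  (p * q)`_(m + n).-1 = p`_m.-1 + q`_n.-1.
Proof.
move=> mp mq sp sq m0 n0.
have hr := size_subXn mp sp; have hs := size_subXn mq sq.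
set r := p - 'X^m in hr; set s := q - 'X^n in hs.
have -> : p * q = 'X^m * 'X^n + 'X^m * s + r * 'X^n + r * s.
  by rewrite /r /s; ring.
have hrs : (r * s)`_(m + n).-1 = 0.
  apply: nth_default; apply: leq_trans (size_polyMleq r s) _.
  move: hr hs; move: (size r) (size s) => x y; lia.
rewrite !coefD hrs addr0 -exprD coefXn coefXnM coefMXn.
have -> : ((m + n).-1 == (m + n))%N = false by lia.
have -> : ((m + n).-1 < m)%N = false by lia.
have -> : ((m + n).-1 < n)%N = false by lia.
have -> : ((m + n).-1 - m = n.-1)%N by lia.
have -> : ((m + n).-1 - n = m.-1)%N by lia.
rewrite /r /s !coefB !coefXn.
have -> : (n.-1 == n) = false by lia.
have -> : (m.-1 == m) = false by lia.
by rewrite !subr0 add0r addrC.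
Qed.

Lemma sublead_exp {R : idomainType} (q : {poly R}) n k :
  q \is monic -> size q = n.+1 -> (0 < n)%N ->
  (q ^+ k.+1)`_(k.+1 * n).-1 = q`_n.-1 *+ k.+1.
Proof.
move=> mq sq n0; elim: k => [|k IH]; first by rewrite expr1 mul1n.
have sk : size (q ^+ k.+1) = (k.+1 * n).+1.
  have := size_exp q k.+1; rewrite sq /= mulnC => <-.
  by rewrite prednK // lt0n size_poly_eq0 monic_neq0 // monic_exp.
rewrite exprSr mulSn addnC (sublead_mul _ _ _ _ (monic_exp _ mq) mq sk sq) ?muln_gt0 // IH.
by rewrite [in RHS]mulrSr.
Qed.
Lemma fwd (C : numClosedFieldType) (d : nat) (a b : C) :
  (2 <= d)%N -> a != 0 ->
  let f := ('X ^+ d + a%:P) ^+ d + b%:P in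
  (exists alpha : 'I_d.+1 -> C,
     injective alpha /\
     (forall z : C, critical_point f z <-> exists i, z = alpha i) /\
     (forall i, local_deg f (alpha i) = d) /\
     (forall i j : 'I_d.+1, (i < d)%N -> (j < d)%N ->
        f.[alpha i] = f.[alpha j])).
Proof.
move=> hd a0 f.
have d0 : (0 < d)%N by lia.
have dC : (d%:R : C) != 0 by rewrite pnatr_eq0; lia.
set G := 'X ^+ d + a%:P.
have mG : G \is monic by exact: monicXnaddC.
have [rs Hrs] := closed_field_poly_normal G.
rewrite (monicP mG) scale1r in Hrs.
have srs : size rs = d.
  by have := size_prod_XsubC rs id; rewrite -Hrs size_XnaddC // => -[].
have dG : G^`() = 'X^(d.-1) *+ d by rewrite /G derivD derivC addr0 derivXn.
have urs : uniq rs.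
  rewrite -separable_prod_XsubC -Hrs unlock; apply/Bezout_coprimepP.
  exists ((a^-1)%:P, - (a^-1 / d%:R)%:P * 'X) => /=.
  have -> : (a^-1)%:P * G + - (a^-1 / d%:R)%:P * 'X * G^`() = 1.
    rewrite dG.
    have -> : 'X^(d.-1) *+ d = 'X^(d.-1) * (d%:R)%:P :> {poly C}.
      by rewrite polyC_natr mulr_natr.
    rewrite /G.
    have hX : 'X * 'X^(d.-1) = 'X^d :> {poly C} by rewrite -exprS prednK.
    have -> : - (a^-1 / d%:R)%:P * 'X * ('X^(d.-1) * (d%:R)%:P)
       = - ((a^-1 / d%:R * d%:R)%:P * ('X * 'X^(d.-1))) :> {poly C}.
      by rewrite polyCM; ring.
    rewrite hX divfK // mulrDr -polyCM mulVf //; ring.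
  exact: eqpxx.
have G0 : G.[0] = a by rewrite /G hornerD hornerXn hornerC expr0n (_ : (d == 0)%N = false) ?add0r //; lia.
have rs0 : 0 \notin rs by rewrite -root_prod_XsubC -Hrs /root G0.
have Groot z : (G.[z] == 0) = (z \in rs).
  by rewrite -root_prod_XsubC -Hrs.
have Groot' z : z \in rs -> G.[z] = 0 by rewrite -Groot => /eqP.
have fz z : f.[z] = G.[z] ^+ d + b by rewrite /f hornerD hornerC horner_exp.
pose alpha := fun i : 'I_d.+1 => if (i < d)%N then rs`_i else 0.
exists alpha; split; [|split; [|split]].
- move=> i j; rewrite /alpha.
  case: ifP => hi; case: ifP => hj.
  + by move/eqP; rewrite nth_uniq ?srs // => /eqP/val_inj.
  + by move=> e; move: rs0; rewrite -e mem_nth ?srs.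
  + by move=> e; move: rs0; rewrite e mem_nth ?srs.
  + move=> _; apply: ord_inj; have := ltn_ord i; have := ltn_ord j.
    move: hi hj => /negbT hi /negbT hj; lia.
- move=> z; rewrite /critical_point /f derivD derivC addr0 deriv_exp dG.
  rewrite /root hornerMn mulrn_eq0 hornerM mulf_eq0 hornerMn mulrn_eq0.
  rewrite hornerXn !expf_eq0 horner_exp expf_eq0 Groot.
  have -> : (0 < d.-1)%N = true by lia.
  have -> : (d == 0)%N = false by lia.
  rewrite /=; split.
  + case/orP => [/eqP->|hz].
      by exists ord_max; rewrite /alpha /= ltnn.
    have hi : (index z rs < d)%N by rewrite -srs index_mem.
    by exists (Ordinal (leqW hi)); rewrite /alpha /= hi nth_index.
  + case=> i ->; rewrite /alpha; case: ifP => hi.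
      by apply/orP; right; rewrite mem_nth ?srs.
    by rewrite eqxx.
- move=> i; rewrite /local_deg /alpha; case: ifP => hi.
  + have zin : rs`_i \in rs by rewrite mem_nth ?srs.
    rewrite fz (eqP (introT eqP (Groot' _ zin))) expr0n (_ : (d == 0)%N = false) ?add0r; last by lia.
    rewrite /f addrK mupX ?monic_neq0 // -/G Hrs mu_prod_XsubC count_uniq_mem // zin.
    by rewrite mul1n.
  + rewrite fz G0.
    have -> : f - (a ^+ d + b)%:P = G ^+ d - (a%:P) ^+ d.
      by rewrite /f polyCD rmorphXn /=; ring.
    rewrite subrXX /G addrK.
    set S := \sum_(_ < _) _.
    have HS0 : S.[0] = a ^+ d.-1 *+ d.
      rewrite /S horner_sum.
      rewrite (eq_bigr (fun _ => a ^+ d.-1)); first by rewrite sumr_const card_ord.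
      move=> k _; rewrite hornerM !horner_exp -/G G0 hornerC -exprD subnK //.
      by have := ltn_ord k; lia.
    have S0 : S != 0.
      apply/eqP => S0; move: HS0; rewrite S0 horner0 => /eqP.
      by rewrite eq_sym mulrn_eq0 expf_eq0 (negbTE a0) andbF; lia.
    rewrite mupM ?expf_neq0 ?polyX_eq0 //.
    rewrite -(subr0 'X) -polyC0 mup_XsubCX eqxx mupNroot ?addn0 //.
    by rewrite /root HS0 mulrn_eq0 expf_eq0 (negbTE a0) andbF; lia.
- move=> i j hi hj; rewrite /alpha hi hj !fz !Groot' ?mem_nth ?srs //.
Qed.
Lemma dvd_prod_pow (R : fieldType) (s : seq R) (p : {poly R}) k :
  uniq s -> (forall z, z \in s -> ('X - z%:P) ^+ k %| p) ->
  (\prod_(z <- s) ('X - z%:P)) ^+ k %| p.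
Proof.
elim: s => [|z s IH] /=; first by rewrite big_nil expr1n dvd1p.
case/andP => zs us H; rewrite big_cons exprMn Gauss_dvdp.
  by rewrite H ?mem_head // IH // => y ys; apply: H; rewrite inE ys orbT.
apply/coprimep_expl/coprimep_expr; rewrite coprimep_sym coprimep_XsubC.
by rewrite root_prod_XsubC.
Qed.

Lemma bwd (C : numClosedFieldType) (d : nat) (f : {poly C}) :
  (2 <= d)%N ->
  f \is monic -> centered f -> size f = (d ^ 2).+1 ->
  (exists alpha : 'I_d.+1 -> C,
     injective alpha /\
     (forall z : C, critical_point f z <-> exists i, z = alpha i) /\
     (forall i, local_deg f (alpha i) = d) /\
     (forall i j : 'I_d.+1, (i < d)%N -> (j < d)%N ->
        f.[alpha i] = f.[alpha j])) ->
  (exists a b : C, a != 0 /\ f = ('X ^+ d + a%:P) ^+ d + b%:P).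
Proof.
move=> hd mf cf sf [alpha [ainj [_ [hloc hval]]]].
have d0 : (0 < d)%N by lia.
have dC : (d%:R : C) != 0 by rewrite pnatr_eq0; lia.
have hd0 : (0 < d)%N by lia.
pose o0 : 'I_d.+1 := ord0.
set c := f.[alpha o0].
pose w := fun i : 'I_d => alpha (widen_ord (leqnSn d) i).
set s := map w (enum 'I_d).
have us : uniq s.
  rewrite map_inj_uniq ?enum_uniq // => i j /ainj /(congr1 val) /= e.
  exact: val_inj.
have ss : size s = d by rewrite size_map size_enum_ord.
have sval z : z \in s -> f.[z] = c.
  by case/mapP => i _ ->; apply: hval => //=; lia.
set g := \prod_(z <- s) ('X - z%:P).
have mg : g \is monic by exact: monic_prod_XsubC.
have sg : size g = d.+1 by rewrite size_prod_XsubC ss.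
have sfc : size (f - c%:P) = (d ^ 2).+1.
  by rewrite -polyCN size_polyDl sf // (leq_ltn_trans (size_polyC_leq1 _)) //; lia.
have mfc : f - c%:P \is monic.
  by rewrite monicE -polyCN lead_coefDl ?(monicP mf) // sf (leq_ltn_trans (size_polyC_leq1 _)) //; lia.
have fc0 : f - c%:P != 0 by rewrite monic_neq0.
have dvg : g ^+ d %| f - c%:P.
  apply: dvd_prod_pow => // z zs.
  case/mapP: zs => i _ ->; rewrite -mup_geq //.
  move: (hloc (widen_ord (leqnSn d) i)) (sval (w i) (map_f _ (mem_enum _ i))).
  by rewrite /local_deg /w => e hc; rewrite hc in e; rewrite e.
have sgd : size (g ^+ d) = (d ^ 2).+1.
  have := size_exp g d; rewrite sg /= mulnn.
  by move=> <-; rewrite prednK // lt0n size_poly_eq0 monic_neq0 // monic_exp.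
have fg : f = g ^+ d + c%:P.
  apply/eqP; rewrite -subr_eq; apply/eqP/esym/eqP.
  by rewrite -eqp_monic ?monic_exp // -dvdp_size_eqp // sgd sfc.
have groot z : root g z = (z \in s) by rewrite root_prod_XsubC.
have sw i : w i \in s by apply: map_f; rewrite mem_enum.
have sP z : z \in s -> exists i, z = w i by case/mapP => i _ ->; exists i.
clearbody g s c; clear dvg sgd sfc mfc fc0 sval us ss.
have gc : g`_(d.-1) = 0.
  move: cf; rewrite /centered sf fg coefD coefC.
  have -> : ((d ^ 2).+1.-2 == 0)%N = false by lia.
  rewrite addr0 /=.
  have := sublead_exp g d d.-1 mg sg d0; rewrite prednK // mulnn => ->.
  by move/eqP; rewrite mulrn_eq0 (_ : (d == 0)%N = false) //=; [move/eqP|lia].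
set b := alpha ord_max.
have bs : b \notin s.
  apply/negP => /sP [i /ainj /(congr1 val) /=]; have := ltn_ord i; lia.
have dvb : ('X - b%:P) ^+ d.-1 %| g^`().
  have hb := hloc ord_max; rewrite /local_deg -/b in hb.
  have fb0 : f - (f.[b])%:P != 0.
    rewrite -size_poly_eq0 -polyCN size_polyDl sf //.
    by rewrite (leq_ltn_trans (size_polyC_leq1 _)) //; lia.
  have : ('X - b%:P) ^+ d %| f - (f.[b])%:P by rewrite -mup_geq // hb.
  case/dvdpP => h eh.
  have df : f^`() = (h^`() * ('X - b%:P) + h *+ d) * ('X - b%:P) ^+ d.-1.
    have -> : f^`() = (h * ('X - b%:P) ^+ d)^`() by rewrite -eh derivB derivC subr0.
    rewrite derivM deriv_exp derivXsubC mul1r.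
    rewrite -{1}(prednK d0) exprS; ring.
  have dg : f^`() = g^`() * g ^+ d.-1 *+ d by rewrite fg derivD derivC addr0 deriv_exp.
  have : ('X - b%:P) ^+ d.-1 %| g^`() * g ^+ d.-1 *+ d by rewrite -dg df dvdp_mull.
  rewrite -scaler_nat dvdpZr // Gauss_dvdpl //.
  apply/coprimep_expl/coprimep_expr; rewrite coprimep_sym coprimep_XsubC.
  by rewrite groot.
have sg' : size g^`() = d.
  apply/eqP; rewrite eqn_leq -ltnS -sg lt_size_deriv ?monic_neq0 //=.
  rewrite leqNgt; apply/negP => hlt.
  have := coef_deriv g d.-1; rewrite prednK // nth_default; last by rewrite -ltnS prednK.
  have -> : g`_d = 1 by rewrite -(monicP mg) lead_coefE sg.
  by move/eqP; rewrite eq_sym (negbTE dC).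
have : ('X - b%:P) ^+ d.-1 %= g^`().
  by rewrite -dvdp_size_eqp // size_exp_XsubC prednK // sg'.
case/eqpP => -[c1 c2] /= /andP[c10 c20] E.
have b0 : b = 0.
  have := congr1 (fun p : {poly C} => p`_(d.-2)) E; rewrite /= !coefZ coef_deriv.
  rewrite (_ : (d.-2).+1 = d.-1); last by lia.
  rewrite gc mul0rn mulr0.
  have sb := sublead_exp ('X - b%:P) 1 d.-2 (monicXsubC _) (size_XsubC _) isT.
  rewrite (_ : (d.-2).+1 = d.-1) in sb; last by lia.
  rewrite muln1 in sb; rewrite sb coefB coefX coefC /= sub0r.
  move/eqP; rewrite mulf_eq0 (negbTE c10) /= mulrn_eq0 oppr_eq0.
  by rewrite (_ : (d.-1 == 0)%N = false) /=; [move/eqP|lia].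
rewrite b0 polyC0 subr0 in E.
have gE : g = 'X^d + (g`_0)%:P.
  apply/polyP => i; rewrite coefD coefXn coefC.
  case: i => [|j]; first by rewrite (_ : (0 == d)%N = false) ?add0r //; lia.
  rewrite /= addr0.
  have [jd|jd] := eqVneq j.+1 d.
    by rewrite jd ?eqxx -(monicP mg) lead_coefE sg.
  have [jlt|jge] := ltnP j.+1 d; last by rewrite nth_default ?sg //; lia.
  have := congr1 (fun p : {poly C} => p`_j) E; rewrite /= !coefZ coef_deriv coefXn.
  rewrite (_ : (j == d.-1)%N = false) ?mulr0; last by lia.
  move/eqP; rewrite eq_sym mulf_eq0 (negbTE c20) /= mulrn_eq0 /=.
  by move/eqP.
exists g`_0, c; split; last by rewrite fg {1}gE.
apply/negP => /eqP a0.
have zero z : z \in s -> z = 0.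
  rewrite -groot gE a0 addr0 => /rootP.
  by rewrite hornerXn => /eqP; rewrite expf_eq0 => /andP[_ /eqP].
pose i0 : 'I_d := Ordinal d0.
pose i1 : 'I_d := Ordinal hd.
have := zero _ (sw i0).
have := zero _ (sw i1).
by move=> e1 e0; move: e0; rewrite -e1 => /ainj /(congr1 val).
Qed.

Theorem lemma3p1 (C : numClosedFieldType) (d : nat) (f : {poly C}) :
  (2 <= d)%N ->
  f \is monic -> centered f -> size f = (d ^ 2).+1 ->
  (exists a b : C, a != 0 /\ f = ('X ^+ d + a%:P) ^+ d + b%:P)
  <->
  (exists alpha : 'I_d.+1 -> C,
     injective alpha /\
     (forall z : C, critical_point f z <-> exists i, z = alpha i) /\
     (forall i, local_deg f (alpha i) = d) /\
     (forall i j : 'I_d.+1, (i < d)%N -> (j < d)%N ->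
        f.[alpha i] = f.[alpha j])).
Proof.
move=> hd mf cf sf; split.
- by case=> a [b [a0 ->]]; exact (@fwd C d a b hd a0).
- exact: bwd.
Qed.
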